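(* Let $m\geq 3$ be odd, $n=3m$, and let $\mathcal{L}_n$ be the latin square defined below. Every transversal of $\mathcal{L}_n$ contains at least one entry of the block $A_{11}$.
   Context: A latin square of order $n$ is viewed as its set of entries $(r,c,s)$ (symbol $s$ in row $r$, column $c$); a transversal is a set of $n$ entries containing each row, column and symbol exactly once. Let $m\ge3$ be odd and $n=3m$. The latin square $\mathcal{L}_n$ has rows, columns and symbols in $\{0,1,\dots,n-1\}$ and is partitioned into nine $m\times m$ blocks $A_{ij}$, $i,j\in\{1,2,3\}$: for $a,b\in\{0,\dots,m-1\}$, the cell in row $(i-1)m+a$ and column $(j-1)m+b$ contains $A_{ij}[a,b]$. Writing $t$ for the residue of $a+b$ modulo $m$ in $\{0,\dots,m-1\}$, $A_{ij}[a,b]=t$ if $t\neq 0$ and $i+j\equiv 2\pmod 3$; $A_{ij}[a,b]=t+m$ if $t\neq m-1$ and $i+j\equiv 0\pmod 3$; $A_{ij}[a,b]=t+2m$ if $t\neq m-1$ and $i+j\equiv1\pmod3$; $A_{ij}[a,b]=0$ if $t=0$ and $(i,j)=(1,1)$; $A_{ij}[a,b]=2m-1$ if $t=0$ and $(i,j)=(2,3)$; $A_{ij}[a,b]=3m-1$ if $t=0$ and $(i,j)=(3,2)$; $A_{ij}[a,b]=0$ if $t=m-1$ and $(i,j)\in\{(2,2),(3,3)\}$; $A_{ij}[a,b]=2m-1$ if $t=m-1$ and $(i,j)\in\{(1,2),(3,1)\}$; $A_{ij}[a,b]=3m-1$ if $t=m-1$ and $(i,j)\in\{(1,3),(2,1)\}$.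 An entry of $\mathcal{L}_n$ is said to be in block $A_{ij}$ if its cell lies in that block. *)

(* Defs.v *)
From mathcomp Require Import all_boot.
Unset Printing Implicit Defensive.

Definition Lsym (m r c : nat) : nat :=
  let i := r %/ m + 1 in
  let j := c %/ m + 1 in
  let t := (r %% m + c %% m) %% m in
  if (t != 0) && ((i + j) %% 3 == 2) then t
  else if (t != m.-1) && ((i + j) %% 3 == 0) then t + m
  else if (t != m.-1) && ((i + j) %% 3 == 1) then t + 2 * m
  else if (t == 0) && (i == 1) && (j == 1) then 0
  else if (t == 0) && (i == 2) && (j == 3) then 2 * m - 1
  else if (t == 0) && (i == 3) && (j == 2) then 3 * m - 1
  else if (t == m.-1) && (((i == 2) && (j == 2)) || ((i == 3) && (j == 3))) then 0
  else if (t == m.-1) && (((i == 1) && (j == 2)) || ((i == 3) && (j == 1))) then 2 * m - 1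
  else 3 * m - 1.
(* The last branch covers t = m-1 and (i,j) in {(1,3),(2,1)}; all other
   (t,i,j) combinations are caught by an earlier branch. *)

Definition is_entry (m n : nat) (e : 'I_n * 'I_n * 'I_n) : bool :=
  nat_of_ord e.2 == Lsym m e.1.1 e.1.2.

Definition is_latin_transversal (m n : nat) (T : {set 'I_n * 'I_n * 'I_n}) : Prop :=
  [/\ #|T| = n,
      (forall e, e \in T -> is_entry m n e),
      (forall x : 'I_n, #|[set e in T | e.1.1 == x]| = 1),
      (forall x : 'I_n, #|[set e in T | e.1.2 == x]| = 1) &
      (forall x : 'I_n, #|[set e in T | e.2 == x]| = 1)].

Definition in_A11 (m n : nat) (e : 'I_n * 'I_n * 'I_n) : bool :=
  (nat_of_ord e.1.1 < m) && (nat_of_ord e.1.2 < m).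

(* Main.v *)
Require Import Defs.
From mathcomp Require Import all_boot zify.

Lemma modfacts m t : 0 < m -> t < m ->
  [/\ (t + m) %% m = t, (t + 2*m) %% m = t, (2*m-1) %% m = m-1, (3*m-1) %% m = m-1 & t %% m = t].
Proof.
move=> m0 tm; split.
- by rewrite modnDr modn_small.
- by rewrite addnC modnMDl modn_small.
- have -> : 2*m-1 = 1*m + (m-1) by lia. by rewrite modnMDl modn_small //; lia.
- have -> : 3*m-1 = 2*m + (m-1) by lia. by rewrite modnMDl modn_small //; lia.
- by rewrite modn_small.
Qed.

Ltac evm := repeat match goal with |- context [ (?a %% 3) ] => let v := eval vm_compute in (a %% 3) in change (a %% 3) with v end.
Ltac evb := repeat match goal with |- context [ ?a == ?b :> nat ] => let v := eval vm_compute in (a == b) in (lazymatch v with true => idtac | false => idtac end); change (a == b) with v end.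

Definition Dd m r c := ((r%/m == 1) && (c%/m == 2)) || ((r%/m==2)&&(c%/m==1)).
Definition Ed m r c := ((r%/m == 1) && (c%/m == 1)) || ((r%/m==2)&&(c%/m==2)).

Lemma cat_sum m r c : 0 < m -> r < 3*m -> c < 3*m -> ~~((r<m) && (c<m)) ->
  (r < m) + (c < m) + Dd m r c + Ed m r c = 1.
Proof.
move=> m0 rlt clt nA.
have rA : (r < m) = (r %/ m == 0) by rewrite eqn0Ngt divn_gt0 // -ltnNge.
have cA : (c < m) = (c %/ m == 0) by rewrite eqn0Ngt divn_gt0 // -ltnNge.
have ri : r %/ m < 3 by rewrite ltn_divLR.
have ci : c %/ m < 3 by rewrite ltn_divLR.
rewrite rA cA in nA *; rewrite /Dd /Ed.
by move: nA ri ci; case: (r %/ m) => [|[|[|?]]] //; case: (c %/ m) => [|[|[|?]]].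
Qed.

Lemma Lsym_cases m r c : 3 <= m -> r < 3*m -> c < 3*m -> ~~((r<m) && (c<m)) ->
 let s := Lsym m r c in let t := (r%%m + c%%m)%%m in
 let D := Dd m r c in let E := Ed m r c in
 [/\ (1 <= s < m) ==> D, (s == 0) ==> E &
   (t == s %% m + (if s < 1 then m-1 else 0)) || ((s == 2*m-1) || (s == 3*m-1)) && D].
Proof.
move=> m3 rlt clt nA s t D E.
have m0 : 0 < m by lia.
have tm : t < m by rewrite ltn_pmod.
have [f1 f2 f3 f4 f5] := @modfacts m t m0 tm.
have rA : (r < m) = (r %/ m == 0) by rewrite eqn0Ngt divn_gt0 // -ltnNge.
have cA : (c < m) = (c %/ m == 0) by rewrite eqn0Ngt divn_gt0 // -ltnNge.
have ri : r %/ m < 3 by rewrite ltn_divLR.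
have ci : c %/ m < 3 by rewrite ltn_divLR.
rewrite rA cA in nA.
subst s D E; rewrite /Dd /Ed /Lsym -/t.
have hm1 : m.-1 = m - 1 by lia.
rewrite hm1; clearbody t.
move: nA ri ci; case: (r %/ m) => [|[|[|?]]] //; case: (c %/ m) => [|[|[|?]]] //= _ _ _.
all: evm; evb; rewrite /= ?andbT ?andbF /=.
all: case E0: (t == 0); case E1: (t == m - 1); rewrite /= ?f1 ?f2 ?f3 ?f4 ?f5; move/eqP: E0; move/eqP: E1 => E1 E0.
all: rewrite ?E0 ?f3 ?f4 ?mod0n; clear f1 f2 f3 f4 f5 rA cA rlt clt; try (exfalso; lia); split; repeat (case: ifP => ?); try lia.
Qed.

Lemma sum_proj n (T : {set 'I_n * 'I_n * 'I_n}) (g : 'I_n * 'I_n * 'I_n -> 'I_n) (F : nat -> nat) :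
  (forall x : 'I_n, #|[set e in T | g e == x]| = 1) ->
  \sum_(e in T) F (g e) = \sum_(x : 'I_n) F x.
Proof.
move=> H; rewrite (partition_big g predT) //=; apply: eq_bigr => x _.
rewrite (eq_bigr (fun _ => F x)); last by move=> e /andP[_ /eqP ->].
rewrite sum_nat_const.
have -> : #|[pred e | (e \in T) && (g e == x)]| = #|[set e in T | g e == x]|.
  by apply: eq_card => e; rewrite !inE.
by rewrite H mul1n.
Qed.

Lemma count_range n a b : \sum_(x < n) ((a <= x) && (x < b) : nat) = minn b n - a.
Proof.
elim: n => [|n IH]; first by rewrite big_ord0; lia.
rewrite big_ord_recr /= IH.
case: (boolP (a <= n)) => ha; case: (boolP (n < b)) => hb /=; lia.
Qed.

Lemma sum_id n : 2 * \sum_(x < n) (x : nat) = n * n.-1.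
Proof.
elim: n => [|n IH]; first by rewrite big_ord0.
rewrite big_ord_recr /= mulnDr IH; case: n {IH} => [|n] //=; nia.
Qed.

Lemma sum_one n : \sum_(x < n) 1 = n.
Proof. by rewrite sum_nat_const card_ord muln1. Qed.

Theorem lemma14 (m : nat) (Hm3 : 3 <= m) (Hodd : odd m)
    (T : {set 'I_(3 * m) * 'I_(3 * m) * 'I_(3 * m)}) :
  is_latin_transversal m (3 * m) T -> exists2 e, e \in T & in_A11 m (3 * m) e.
Proof.
case=> HT Hent Hr Hc Hs.
have m0 : 0 < m by lia.
case: (boolP [exists e in T, in_A11 m (3*m) e]) => [/existsP[e /andP[eT he]]|nex];
  first by exists e.
exfalso.
move/existsPn: nex => nex.
have nA : forall e, e \in T -> ~~ ((e.1.1 < m) && (e.1.2 < m)).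
  by move=> e eT; have := nex e; rewrite eT.
have ent : forall e, e \in T -> (e.2 : nat) = Lsym m e.1.1 e.1.2.
  by move=> e /Hent /eqP.
have LC := fun e (eT : e \in T) => @Lsym_cases m e.1.1 e.1.2 Hm3 (ltn_ord _) (ltn_ord _) (nA e eT).
have [e0 e0T e0P] : exists2 e, e \in T &
    ((e.2 == 2*m-1 :> nat) || (e.2 == 3*m-1 :> nat)) && Dd m e.1.1 e.1.2.
  case: (boolP [exists e in T, ((e.2 == 2*m-1 :> nat) || (e.2 == 3*m-1 :> nat)) && Dd m e.1.1 e.1.2])
    => [/existsP[e /andP[eT he]]|nex2]; first by exists e.
  exfalso; move/existsPn: nex2 => nex2.
  have tw : forall e, e \in T ->
      (e.1.1 %% m + e.1.2 %% m) %% m = e.2 %% m + (m-1) * (e.2 < 1).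
    move=> e eT; have [_ _ h] := LC e eT; rewrite -ent // in h.
    have := nex2 e; rewrite eT /= => /negbTE h2; rewrite h2 orbF in h.
    by move/eqP: h ->; case: (_ < 1); rewrite ?muln1 ?muln0 ?addn0.
  have h1 : \sum_(x < 3*m) (((x:nat) < 1) : nat) = 1.
    rewrite (eq_bigr (fun x : 'I_(3*m) => ((0 <= x) && (x < 1) : nat))) ?count_range //; lia.
  have S1 : \sum_(e in T) ((e.1.1 %% m + e.1.2 %% m) %% m) = \sum_(x < 3*m) (x %% m) + (m-1).
    rewrite (eq_bigr _ tw).
    rewrite (@sum_proj _ T (fun e => e.2) (fun x => x %% m + (m-1) * (x < 1)) Hs).
    by rewrite big_split /= -big_distrr /= h1 muln1.
  have P1 : \sum_(e in T) (e.1.1 : nat) = \sum_(x < 3*m) (x : nat) :=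
    @sum_proj _ T (fun e => e.1.1) (fun x => x) Hr.
  have P2 : \sum_(e in T) (e.1.2 : nat) = \sum_(x < 3*m) (x : nat) :=
    @sum_proj _ T (fun e => e.1.2) (fun x => x) Hc.
  have S2 : (\sum_(e in T) ((e.1.1 %% m + e.1.2 %% m) %% m)) %% m
          = (2 * \sum_(x < 3*m) (x:nat)) %% m.
    by rewrite modn_summ big_split /= -modnDm !modn_summ modnDm P1 P2 addnn -mul2n.
  have C0 : (\sum_(x < 3*m) (x:nat)) %% m = 0.
    apply/eqP; rewrite -/(dvdn m _) -(@Gauss_dvdr m 2) ?coprimen2 // sum_id.
    by rewrite -mulnA; apply/dvdn_mull/dvdn_mulr.
  have M0 : (\sum_(x < 3*m) (x %% m)) %% m = 0 by rewrite modn_summ C0.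
  move: S2; rewrite S1 -modnMmr C0 muln0 mod0n -modnDml M0 add0n modn_small; lia.
have cnt : forall (g : 'I_(3*m) * 'I_(3*m) * 'I_(3*m) -> 'I_(3*m)) a b,
    (forall x : 'I_(3*m), #|[set e in T | g e == x]| = 1) ->
    \sum_(e in T) ((a <= g e) && (g e < b) : nat) = minn b (3*m) - a.
  move=> g a b Hg.
  rewrite (@sum_proj _ T g (fun x => ((a <= x) && (x < b) : nat)) Hg).
  exact: count_range.
have sA : \sum_(e in T) ((0 <= e.1.1) && (e.1.1 < m) : nat) = m.
  by rewrite (cnt (fun e => e.1.1)) //; lia.
have sB : \sum_(e in T) ((0 <= e.1.2) && (e.1.2 < m) : nat) = m.
  by rewrite (cnt (fun e => e.1.2)) //; lia.
have sO : \sum_(e in T) ((0 <= e.2) && (e.2 < 3*m) : nat) = 3*m.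
  by rewrite (cnt (fun e => e.2)) //; lia.
have sS : \sum_(e in T) ((1 <= e.2) && (e.2 < m) : nat) = m - 1.
  by rewrite (cnt (fun e => e.2)) //; lia.
have tot : \sum_(e in T) ((0 <= e.1.1) && (e.1.1 < m) : nat) + \sum_(e in T) ((0 <= e.1.2) && (e.1.2 < m) : nat)
   + \sum_(e in T) (Dd m e.1.1 e.1.2 : nat) + \sum_(e in T) (Ed m e.1.1 e.1.2 : nat)
   = \sum_(e in T) ((0 <= e.2) && (e.2 < 3*m) : nat).
  rewrite -!big_split; apply: eq_bigr => e eT /=.
  by rewrite (ltn_ord e.2) /= cat_sum // (nA e eT).
have le1 : \sum_(e in T) ((1 <= e.2) && (e.2 < m) : nat)
   + \sum_(e in T) (((e.2 == 2*m-1 :> nat) || (e.2 == 3*m-1 :> nat)) && Dd m e.1.1 e.1.2 : nat)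
   <= \sum_(e in T) (Dd m e.1.1 e.1.2 : nat).
  rewrite -big_split; apply: leq_sum => e eT /=.
  have [h _ _] := LC e eT; rewrite -ent // in h.
  case: (Dd m e.1.1 e.1.2) h; rewrite /= ?andbF ?andbT ?implybF.
    case: (e.2 == 2*m-1 :> nat) / eqP; case: (e.2 == 3*m-1 :> nat) / eqP => /=; lia.
  by move=> /negbTE ->.
have ge1 : 1 <= \sum_(e in T) (((e.2 == 2*m-1 :> nat) || (e.2 == 3*m-1 :> nat)) && Dd m e.1.1 e.1.2 : nat).
  by rewrite (bigD1 e0) //= e0P.
have E0 : \sum_(e in T) (Ed m e.1.1 e.1.2 : nat) == 0 by apply/eqP; lia.
rewrite sum_nat_eq0 in E0.
have z3 : 0 < 3 * m by lia.
have : 0 < #|[set e in T | e.2 == Ordinal z3]| by rewrite Hs.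
case/card_gt0P => e; rewrite inE => /andP[eT /eqP e2].
have [_ h _] := LC e eT; rewrite -ent // e2 /= in h.
by move/forallP: E0 => /(_ e); rewrite eT h.
Qed.
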